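(* Let $b,c,d\in\mathbb{R}$ and $Q(\phi)=\phi^4-c\phi^2+2b\phi+2d$. Consider real solutions $\phi$ of the system $\phi'''-6\phi^2\phi'+c\phi'=0$, $\phi''-2\phi^3+c\phi=b$, $(\phi')^2=Q(\phi)$. There exist bounded periodic (nonconstant) solutions of this system if and only if the four roots of $Q$ are real and distinct, which is equivalent to $(b,c)\in\Omega$, where $\Omega=\{(b,c): b\in(-b_c,b_c),\ c>0\}$ and $b_c=\sqrt{2c^3}/\sqrt{27}$. Ordering the four roots of $Q$ as $u_4<u_3<u_2<u_1$, the solution is given by $$\phi(x)=u_4+\frac{(u_2-u_4)(u_3-u_4)}{(u_2-u_4)-(u_2-u_3)\mathrm{sn}^2(\nu x)},$$ where $\nu=\frac12\sqrt{(u_1-u_3)(u_2-u_4)}$ and $\mathrm{sn}$ has modulus $k=\sqrt{\frac{(u_1-u_4)(u_2-u_3)}{(u_1-u_3)(u_2-u_4)}}$. The fundamental period of $\phi$ is $2\nu^{-1}K(k)$, and its minimal and maximal values on $[-\nu^{-1}K,\nu^{-1}K]$ are attained at $\phi(0)=u_3$ and $\phi(\pm\nu^{-1}K)=u_2$, respectively.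
   Context: $K(k)$ denotes the complete elliptic integral of the first kind and $\mathrm{sn}$ the Jacobi elliptic sine function with modulus $k$. *)

(* Defs.v *)
From Stdlib Require Import Reals ClassicalEpsilon.
From Coquelicot Require Import Coquelicot.
Open Scope R_scope.

Definition ellF (k phi : R) : R :=
  RInt (fun t => / sqrt (1 - k ^ 2 * sin t ^ 2)) 0 phi.

Definition ellK (k : R) : R := ellF k (PI / 2).

(* Jacobi amplitude: the inverse of phi |-> F(phi,k) (a bijection R -> R
   for 0 <= k < 1), chosen by Hilbert's epsilon. *)
Definition jam (k u : R) : R :=
  epsilon (inhabits 0) (fun phi => ellF k phi = u).

Definition jsn (k u : R) : R := sin (jam k u).

Definition Qpoly (b c d p : R) : R := p ^ 4 - c * p ^ 2 + 2 * b * p + 2 * d.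

Definition is_solution (b c d : R) (phi : R -> R) : Prop :=
  exists phi1 phi2 phi3 : R -> R, forall x : R,
    is_derive phi x (phi1 x) /\ is_derive phi1 x (phi2 x) /\
    is_derive phi2 x (phi3 x) /\
    phi3 x - 6 * phi x ^ 2 * phi1 x + c * phi1 x = 0 /\
    phi2 x - 2 * phi x ^ 3 + c * phi x = b /\
    phi1 x ^ 2 = Qpoly b c d (phi x).

Definition bounded_fun (phi : R -> R) : Prop :=
  exists M : R, forall x : R, Rabs (phi x) <= M.

Definition is_period (phi : R -> R) (T : R) : Prop :=
  0 < T /\ forall x : R, phi (x + T) = phi x.

Definition periodic_fun (phi : R -> R) : Prop := exists T : R, is_period phi T.

Definition nonconstant (phi : R -> R) : Prop := exists x y : R, phi x <> phi y.

Definition fundamental_period (phi : R -> R) (T : R) : Prop :=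
  is_period phi T /\ forall T' : R, 0 < T' < T -> ~ is_period phi T'.

Definition four_ordered_roots (b c d u1 u2 u3 u4 : R) : Prop :=
  u4 < u3 /\ u3 < u2 /\ u2 < u1 /\
  forall p : R, Qpoly b c d p = (p - u1) * (p - u2) * (p - u3) * (p - u4).

Definition four_distinct_real_roots (b c d : R) : Prop :=
  exists u1 u2 u3 u4 : R, four_ordered_roots b c d u1 u2 u3 u4.

Definition b_crit (c : R) : R := sqrt (2 * c ^ 3) / sqrt 27.

Definition in_Omega (b c : R) : Prop :=
  0 < c /\ - b_crit c < b /\ b < b_crit c.

Definition nu_of (u1 u2 u3 u4 : R) : R := / 2 * sqrt ((u1 - u3) * (u2 - u4)).

Definition k_of (u1 u2 u3 u4 : R) : R :=
  sqrt (((u1 - u4) * (u2 - u3)) / ((u1 - u3) * (u2 - u4))).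

Definition phi_sol (u1 u2 u3 u4 : R) (x : R) : R :=
  u4 + ((u2 - u4) * (u3 - u4)) /
       ((u2 - u4) - (u2 - u3) * jsn (k_of u1 u2 u3 u4) (nu_of u1 u2 u3 u4 * x) ^ 2).

(* Main.v *)
Require Import Defs.
From Stdlib Require Import Reals Lra Psatz ZArith ClassicalEpsilon.
From Coquelicot Require Import Coquelicot.
Open Scope R_scope.

Definition fk (k t : R) : R := / sqrt (1 - k ^ 2 * sin t ^ 2).

Lemma sin2_le1 t : sin t ^ 2 <= 1.
Proof. pose proof (sin2_cos2 t). unfold Rsqr in H. nra. Qed.

Lemma fk_arg_pos k t : k ^ 2 < 1 -> 0 < 1 - k ^ 2 * sin t ^ 2.
Proof. intros Hk. pose proof (sin2_le1 t). assert (0 <= k^2) by nra.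
  assert (0 <= sin t ^ 2) by nra. nra. Qed.

Lemma fk_ge1 k t : k ^ 2 < 1 -> 1 <= fk k t.
Proof. intros Hk. unfold fk. pose proof (fk_arg_pos k t Hk).
  assert (0 <= k^2) by nra. assert (0 <= sin t ^ 2) by nra.
  assert (sqrt (1 - k ^ 2 * sin t ^ 2) <= 1).
  { apply Rle_trans with (sqrt 1); [apply sqrt_le_1_alt|rewrite sqrt_1; lra]. assert (0 <= k^2 * sin t ^2) by (apply Rmult_le_pos; lra). lra. }
  assert (0 < sqrt (1 - k ^ 2 * sin t ^ 2)) by (apply sqrt_lt_R0; lra).
  apply Rle_trans with (/1); [rewrite Rinv_1; lra| apply Rinv_le_contravar; lra]. Qed.

Lemma fk_derive k t : k ^ 2 < 1 -> ex_derive (fk k) t.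
Proof. intros Hk. pose proof (fk_arg_pos k t Hk). unfold fk. auto_derive.
  split; [lra|split;[|auto]]. apply Rgt_not_eq. apply sqrt_lt_R0; lra. Qed.

Lemma fk_cont k t : k ^ 2 < 1 -> continuous (fk k) t.
Proof. intros Hk. apply (ex_derive_continuous (K:=R_AbsRing) (V:=R_NormedModule) (fk k)). now apply fk_derive. Qed.

Lemma fk_ex_RInt k a b : k ^ 2 < 1 -> ex_RInt (fk k) a b.
Proof. intros Hk. apply (ex_RInt_continuous (V:=R_CompleteNormedModule)). intros; now apply fk_cont. Qed.

Lemma ellF_eq k x : ellF k x = RInt (fk k) 0 x.
Proof. reflexivity. Qed.

Lemma ellF_derive k x : k ^ 2 < 1 -> is_derive (ellF k) x (fk k x).
Proof. intros Hk. apply (is_derive_RInt (V:=R_CompleteNormedModule) (fk k) (ellF k) 0 x).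
  - apply filter_forall. intros y. apply RInt_correct. now apply fk_ex_RInt.
  - now apply fk_cont. Qed.

Lemma ellF_diff k a b : k ^ 2 < 1 -> ellF k b - ellF k a = RInt (fk k) a b.
Proof. intros Hk. rewrite !ellF_eq. rewrite <- (RInt_Chasles (V:=R_CompleteNormedModule) (fk k) 0 a b).
  - change (plus ?x ?y) with (x + y). fold (fk k). ring.
  - now apply fk_ex_RInt.
  - now apply fk_ex_RInt. Qed.

Lemma ellF_ge k a b : k ^ 2 < 1 -> a <= b -> b - a <= ellF k b - ellF k a.
Proof. intros Hk Hab. rewrite ellF_diff by auto.
  assert (RInt (fun _ => 1) a b <= RInt (fk k) a b).
  { apply RInt_le; auto. apply ex_RInt_const. now apply fk_ex_RInt.
    intros; now apply fk_ge1. }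
  rewrite RInt_const in H. change (scal (b - a) 1) with ((b-a)*1) in H. lra. Qed.

Lemma ellF_0 k : ellF k 0 = 0.
Proof. unfold ellF. apply (RInt_point (V:=R_CompleteNormedModule)). Qed.

Lemma ellF_cont k : k ^ 2 < 1 -> continuity (ellF k).
Proof. intros Hk x. apply derivable_continuous_pt. exists (fk k x).
  apply is_derive_Reals. now apply ellF_derive. Qed.

Lemma ellF_lt k a b : k ^ 2 < 1 -> a < b -> ellF k a < ellF k b.
Proof. intros. pose proof (ellF_ge k a b H). lra. Qed.

Lemma ellF_inj k a b : k ^ 2 < 1 -> ellF k a = ellF k b -> a = b.
Proof. intros Hk H. destruct (Rtotal_order a b) as [h|[h|h]]; auto.
  - apply (ellF_lt k) in h; auto; lra.
  - apply (ellF_lt k) in h; auto; lra. Qed.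

Lemma ellF_surj k u : k ^ 2 < 1 -> exists t, ellF k t = u.
Proof. intros Hk.
  destruct (IVT_cor (fun t => ellF k t - u) (- Rabs u) (Rabs u)) as [z [_ Hz]].
  - intros x. apply continuity_pt_minus. apply ellF_cont; auto. apply continuity_pt_const. intros a b; auto.
  - pose proof (Rabs_pos u); lra.
  - pose proof (ellF_ge k (- Rabs u) 0 Hk). pose proof (ellF_ge k 0 (Rabs u) Hk).
    rewrite ellF_0 in *. pose proof (Rabs_pos u).
    assert (-Rabs u <= u <= Rabs u) by (unfold Rabs; destruct Rcase_abs; lra).
    assert (ellF k (- Rabs u) - u <= 0) by lra. assert (0 <= ellF k (Rabs u) - u) by lra. nra.
  - exists z. lra. Qed.

Lemma jam_spec k u : k ^ 2 < 1 -> ellF k (jam k u) = u.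
Proof. intros Hk. unfold jam. apply (epsilon_spec (inhabits 0) (fun phi => ellF k phi = u)).
  now apply ellF_surj. Qed.

Lemma jam_unique k t u : k ^ 2 < 1 -> ellF k t = u -> jam k u = t.
Proof. intros Hk H. apply (ellF_inj k); auto. rewrite jam_spec; auto. Qed.

Lemma const_deriv (h : R -> R) : (forall t, is_derive h t 0) -> forall x y, h x = h y.
Proof. intros H x y. destruct (Rtotal_order x y) as [l|[e|l]].
  - apply (eq_is_derive (V:=R_NormedModule)); auto.
  - now subst.
  - symmetry. apply (eq_is_derive (V:=R_NormedModule)); auto. Qed.

Lemma fk_shift k t : fk k (t + PI) = fk k t.
Proof. unfold fk. rewrite neg_sin. f_equal. f_equal. ring. Qed.
Lemma fk_refl k t : fk k (PI - t) = fk k t.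
Proof. unfold fk. rewrite sin_PI_x. auto. Qed.
Lemma fk_neg k t : fk k (- t) = fk k t.
Proof. unfold fk. rewrite sin_neg. f_equal. f_equal. ring. Qed.

Lemma ellF_shift k t : k ^ 2 < 1 -> ellF k (t + PI) = ellF k t + ellF k PI.
Proof. intros Hk.
  assert (forall s, is_derive (fun s => ellF k (s + PI) - ellF k s) s 0).
  { intros s. replace 0 with (1 * fk k (s + PI) - fk k s) by (rewrite fk_shift; ring).
    apply (is_derive_minus (fun s => ellF k (s + PI)) (ellF k)).
    - apply (is_derive_comp (ellF k) (fun s => s + PI)). apply ellF_derive; auto.
      auto_derive; auto; ring.
    - apply ellF_derive; auto. }
  pose proof (const_deriv _ H t 0). simpl in H0. rewrite ellF_0, Rplus_0_l in H0. lra. Qed.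

Lemma ellF_refl k t : k ^ 2 < 1 -> ellF k (PI - t) + ellF k t = ellF k PI.
Proof. intros Hk.
  assert (forall s, is_derive (fun s => ellF k (PI - s) + ellF k s) s 0).
  { intros s. replace 0 with ((-1) * fk k (PI - s) + fk k s) by (rewrite fk_refl; ring).
    apply (is_derive_plus (fun s => ellF k (PI - s)) (ellF k)).
    - apply (is_derive_comp (ellF k) (fun s => PI - s)). apply ellF_derive; auto.
      auto_derive; auto; ring.
    - apply ellF_derive; auto. }
  pose proof (const_deriv _ H t 0). simpl in H0. rewrite ellF_0, Rminus_0_r, Rplus_0_r in H0. lra. Qed.

Lemma ellF_odd k t : k ^ 2 < 1 -> ellF k (- t) = - ellF k t.
Proof. intros Hk.
  assert (forall s, is_derive (fun s => ellF k (- s) + ellF k s) s 0).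
  { intros s. replace 0 with ((-1) * fk k (- s) + fk k s) by (rewrite fk_neg; ring).
    apply (is_derive_plus (fun s => ellF k (- s)) (ellF k)).
    - apply (is_derive_comp (ellF k) (fun s => - s)). apply ellF_derive; auto.
      auto_derive; auto; ring.
    - apply ellF_derive; auto. }
  pose proof (const_deriv _ H t 0). simpl in H0. rewrite Ropp_0, ellF_0 in H0. lra. Qed.

Lemma ellF_PI k : k ^ 2 < 1 -> ellF k PI = 2 * ellK k.
Proof. intros Hk. pose proof (ellF_refl k (PI/2) Hk). unfold ellK.
  replace (PI - PI/2) with (PI/2) in H by field. lra. Qed.

Lemma jam_shift k u : k ^ 2 < 1 -> jam k (u + 2 * ellK k) = jam k u + PI.
Proof. intros Hk. apply jam_unique; auto. rewrite ellF_shift, ellF_PI, jam_spec; auto. Qed.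

Lemma jam_0 k : k ^ 2 < 1 -> jam k 0 = 0.
Proof. intros Hk. apply jam_unique; auto. apply ellF_0. Qed.
Lemma jam_K k : k ^ 2 < 1 -> jam k (ellK k) = PI/2.
Proof. intros Hk. apply jam_unique; auto. Qed.
Lemma jam_mK k : k ^ 2 < 1 -> jam k (- ellK k) = - (PI/2).
Proof. intros Hk. apply jam_unique; auto. rewrite ellF_odd; auto. Qed.
Lemma jam_2K k : k ^ 2 < 1 -> jam k (2 * ellK k) = PI.
Proof. intros Hk. apply jam_unique; auto. apply ellF_PI; auto. Qed.

Lemma ellK_pos k : k ^ 2 < 1 -> PI / 2 <= ellK k.
Proof. intros Hk. pose proof (ellF_ge k 0 (PI/2) Hk). rewrite ellF_0 in H. unfold ellK.
  pose proof PI_RGT_0. lra. Qed.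

Lemma jam_mono k u v : k ^ 2 < 1 -> u < v -> jam k u < jam k v.
Proof. intros Hk H. destruct (Rlt_or_le (jam k u) (jam k v)) as [h|h]; auto.
  destruct h as [h|h].
  - apply (ellF_lt k) in h; auto. rewrite !jam_spec in h; auto. lra.
  - rewrite <- (jam_spec k u), <- (jam_spec k v), h in H; auto. lra. Qed.

Lemma jam_lip k u v : k ^ 2 < 1 -> u <= v -> jam k v - jam k u <= v - u.
Proof. intros Hk H. destruct H as [H|H].
  - pose proof (jam_mono k u v Hk H). pose proof (ellF_ge k (jam k u) (jam k v) Hk).
    rewrite !jam_spec in H1; auto. lra.
  - subst; lra. Qed.

Lemma jam_cont k u : k ^ 2 < 1 -> continuity_pt (jam k) u.
Proof. intros Hk. intros eps Heps. exists eps. split; auto. intros x [_ Hx].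
  simpl in *. unfold R_dist in *. destruct (Rle_or_lt u x).
  - pose proof (jam_lip k u x Hk H). pose proof (jam_mono k u x Hk).
    destruct H as [H|H]. specialize (H1 H). rewrite Rabs_pos_eq in Hx |- *; lra.
    subst. rewrite Rminus_diag, Rabs_R0. auto.
  - pose proof (jam_lip k x u Hk (Rlt_le _ _ H)). pose proof (jam_mono k x u Hk H).
    rewrite Rabs_left in Hx |- *; lra. Qed.

Definition dn k t := sqrt (1 - k ^ 2 * sin t ^ 2).

Lemma jam_derive k u : k ^ 2 < 1 -> is_derive (jam k) u (dn k (jam k u)).
Proof. intros Hk. apply is_derive_Reals.
  assert (Prf : forall a, jam k (u-1) <= a <= jam k (u+1) -> derivable_pt (ellF k) a).
  { intros a _. exists (fk k a). apply is_derive_Reals. apply ellF_derive; auto. }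
  assert (Hi : jam k (u - 1) <= jam k u <= jam k (u + 1)).
  { split; apply Rlt_le; apply jam_mono; auto; lra. }
  pose proof (Ranalysis5.derivable_pt_lim_recip_interv (ellF k) (jam k) (u-1) (u+1) u Prf
    (jam_cont k u Hk) ltac:(lra) ltac:(lra) Hi).
  assert (Hd : derive_pt (ellF k) (jam k u) (Prf (jam k u) Hi) = fk k (jam k u)).
  { apply derive_pt_eq_0. apply is_derive_Reals. apply ellF_derive; auto. }
  rewrite Hd in H.
  assert (Hp : 0 < dn k (jam k u)) by (apply sqrt_lt_R0; apply fk_arg_pos; auto).
  replace (dn k (jam k u)) with (1 / fk k (jam k u)).
  2:{ unfold fk, dn in *. field. lra. }
  apply H.
  - intros x _. unfold comp, id. apply jam_spec; auto.
  - unfold fk. fold (dn k (jam k u)). apply Rinv_neq_0_compat. lra. Qed.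

Lemma coeffs b c d u1 u2 u3 u4 :
  (forall p : R, Qpoly b c d p = (p - u1) * (p - u2) * (p - u3) * (p - u4)) ->
  u1 = -(u2+u3+u4) /\ c = -(u1*u2+u1*u3+u1*u4+u2*u3+u2*u4+u3*u4) /\
  b = -(u1*u2*u3+u1*u2*u4+u1*u3*u4+u2*u3*u4)/2 /\ d = u1*u2*u3*u4/2.
Proof. intros H. pose proof (H 0) as H0. pose proof (H 1) as H1. pose proof (H (-1)) as H2.
  pose proof (H 2) as H3. unfold Qpoly in *. 
  repeat split; nra. Qed.

Lemma alg_Q u1 u2 u3 u4 nu k s co S :
  co ^ 2 = 1 - s ^ 2 -> S ^ 2 = 1 - k ^ 2 * s ^ 2 ->
  k ^ 2 = (u1 - u4) * (u2 - u3) / ((u1 - u3) * (u2 - u4)) ->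
  nu ^ 2 = (u1 - u3) * (u2 - u4) / 4 ->
  (u1 - u3) * (u2 - u4) <> 0 -> (u2 - u4) - (u2 - u3) * s ^ 2 <> 0 ->
  let phi := u4 + (u2 - u4) * (u3 - u4) / ((u2 - u4) - (u2 - u3) * s ^ 2) in
  (2 * (u2 - u4) * (u2 - u3) * (u3 - u4) * nu * s * co * S / ((u2 - u4) - (u2 - u3) * s ^ 2) ^ 2) ^ 2
  = (phi - u1) * (phi - u2) * (phi - u3) * (phi - u4).
Proof. intros Hc HS Hk Hn Hd Hden phi. unfold phi.
  match goal with |- ?L = _ => replace L with
   (4 * ((u2 - u4) * (u2 - u3) * (u3 - u4))^2 * nu^2 * s^2 * co^2 * S^2 / ((u2 - u4) - (u2 - u3) * s ^ 2) ^ 4) by (field; auto) end.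
  rewrite HS, Hc, Hn, Hk. field. repeat split; auto; intro; apply Hd; rewrite H; ring. Qed.

Lemma alg_ODE u1 u2 u3 u4 nu k s co S :
  co ^ 2 = 1 - s ^ 2 -> S ^ 2 = 1 - k ^ 2 * s ^ 2 ->
  k ^ 2 = (u1 - u4) * (u2 - u3) / ((u1 - u3) * (u2 - u4)) ->
  nu ^ 2 = (u1 - u3) * (u2 - u4) / 4 -> S <> 0 ->
  (u1 - u3) * (u2 - u4) <> 0 -> (u2 - u4) - (u2 - u3) * s ^ 2 <> 0 ->
  let den := (u2 - u4) - (u2 - u3) * s ^ 2 in
  let phi := u4 + (u2 - u4) * (u3 - u4) / den in
  2 * (u2 - u4) * (u2 - u3) * (u3 - u4) * nu *
    (((co ^ 2 - s ^ 2) * S ^ 2 - k ^ 2 * s ^ 2 * co ^ 2) / (S * den ^ 2)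
     + 4 * (u2 - u3) * s ^ 2 * co ^ 2 * S / den ^ 3) * (nu * S)
  = ((phi - u2) * (phi - u3) * (phi - u4) + (phi - u1) * (phi - u3) * (phi - u4)
     + (phi - u1) * (phi - u2) * (phi - u4) + (phi - u1) * (phi - u2) * (phi - u3)) / 2.
Proof. intros Hc HS Hk Hn HS0 Hd Hden den phi. unfold phi, den.
  match goal with |- ?L = _ => replace L with
   (2 * (u2 - u4) * (u2 - u3) * (u3 - u4) * nu ^ 2 *
    (((co ^ 2 - s ^ 2) * S ^ 2 - k ^ 2 * s ^ 2 * co ^ 2) / ((u2 - u4) - (u2 - u3) * s ^ 2) ^ 2
     + 4 * (u2 - u3) * s ^ 2 * co ^ 2 * S ^ 2 / ((u2 - u4) - (u2 - u3) * s ^ 2) ^ 3)) by (field; auto) end.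
  rewrite HS, Hc, Hk, Hn. field. repeat split; auto; intro; apply Hd; rewrite H; ring. Qed.

Definition Gth (u2 u3 u4 th : R) := u4 + (u2 - u4) * (u3 - u4) / ((u2 - u4) - (u2 - u3) * sin th ^ 2).
Definition G1 (u2 u3 u4 nu k th : R) :=
  2 * (u2 - u4) * (u2 - u3) * (u3 - u4) * nu * sin th * cos th * dn k th / ((u2 - u4) - (u2 - u3) * sin th ^ 2) ^ 2.
Definition G1d (u2 u3 u4 nu k th : R) :=
  let s := sin th in let co := cos th in let S := dn k th in
  let den := (u2 - u4) - (u2 - u3) * s ^ 2 in
  2 * (u2 - u4) * (u2 - u3) * (u3 - u4) * nu *
    (((co ^ 2 - s ^ 2) * S ^ 2 - k ^ 2 * s ^ 2 * co ^ 2) / (S * den ^ 2)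
     + 4 * (u2 - u3) * s ^ 2 * co ^ 2 * S / den ^ 3).

Lemma deriv_val (f : R -> R) (x l l' : R) : is_derive f x l -> @eq R l l' -> is_derive f x l'.
Proof. intros H e; subst; auto. Qed.

Lemma cos2 t : cos t ^ 2 = 1 - sin t ^ 2.
Proof. pose proof (sin2_cos2 t). unfold Rsqr in H. lra. Qed.

Lemma Gth_derive u2 u3 u4 th : (u2 - u4) - (u2 - u3) * sin th ^ 2 <> 0 ->
  is_derive (Gth u2 u3 u4) th ((u2 - u4) * (u3 - u4) * (2 * (u2 - u3) * sin th * cos th) / ((u2 - u4) - (u2 - u3) * sin th ^ 2) ^ 2).
Proof. intros H. unfold Gth. auto_derive; auto. field. auto. Qed.

Lemma G1_derive u2 u3 u4 nu k th : k ^ 2 < 1 -> (u2 - u4) - (u2 - u3) * sin th ^ 2 <> 0 ->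
  is_derive (G1 u2 u3 u4 nu k) th (G1d u2 u3 u4 nu k th).
Proof. intros Hk H. pose proof (fk_arg_pos k th Hk).
  assert (HS : 0 < dn k th) by (apply sqrt_lt_R0; auto).
  unfold G1, G1d, dn in *. cbv zeta. auto_derive.
  - repeat split; auto; lra.
  - replace (1 + - (k * (k * 1) * (sin th * (sin th * 1)))) with (1 - k^2 * sin th^2) by ring.
    set (S := sqrt (1 - k ^ 2 * sin th ^ 2)) in *. field. split; auto; lra. Qed.

Section Sol.
Variables (b c d u1 u2 u3 u4 : R).
Hypothesis H4 : four_ordered_roots b c d u1 u2 u3 u4.

Let k := k_of u1 u2 u3 u4.
Let nu := nu_of u1 u2 u3 u4.

Lemma ord : u4 < u3 /\ u3 < u2 /\ u2 < u1.
Proof. destruct H4 as [a [b' [c' _]]]. auto. Qed.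

Lemma k2_eq : k ^ 2 = (u1 - u4) * (u2 - u3) / ((u1 - u3) * (u2 - u4)).
Proof. pose proof ord. unfold k, k_of. rewrite pow2_sqrt; auto.
  apply Rmult_le_pos. nra. apply Rlt_le, Rinv_0_lt_compat. nra. Qed.

Lemma k2_lt1 : k ^ 2 < 1.
Proof. pose proof ord. rewrite k2_eq. assert (0 < (u1 - u3) * (u2 - u4)) by nra.
  apply Rmult_lt_reg_r with ((u1 - u3) * (u2 - u4)); auto. unfold Rdiv.
  rewrite Rmult_assoc, Rinv_l, Rmult_1_r, Rmult_1_l by lra. nra. Qed.

Lemma nu2_eq : nu ^ 2 = (u1 - u3) * (u2 - u4) / 4.
Proof. pose proof ord. unfold nu, nu_of.
  replace ((/ 2 * sqrt ((u1 - u3) * (u2 - u4))) ^ 2) with (/4 * sqrt ((u1 - u3) * (u2 - u4)) ^ 2) by field.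
  rewrite pow2_sqrt. field. nra. Qed.

Lemma nu_pos : 0 < nu.
Proof. pose proof ord. unfold nu, nu_of. apply Rmult_lt_0_compat. lra. apply sqrt_lt_R0. nra. Qed.

Lemma den_ge th : u3 - u4 <= (u2 - u4) - (u2 - u3) * sin th ^ 2.
Proof. pose proof ord. pose proof (sin2_le1 th). nra. Qed.

Lemma den_ne th : (u2 - u4) - (u2 - u3) * sin th ^ 2 <> 0.
Proof. pose proof ord. pose proof (den_ge th). lra. Qed.

Lemma phi_sol_eq x : phi_sol u1 u2 u3 u4 x = Gth u2 u3 u4 (jam k (nu * x)).
Proof. reflexivity. Qed.

Lemma th_derive x : is_derive (fun x => jam k (nu * x)) x (nu * dn k (jam k (nu * x))).
Proof. apply (is_derive_comp (jam k) (fun x => nu * x)). apply jam_derive, k2_lt1.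
  auto_derive; auto; ring. Qed.

Lemma Qd_eq p : 2 * p ^ 3 - c * p + b =
  ((p - u2) * (p - u3) * (p - u4) + (p - u1) * (p - u3) * (p - u4)
     + (p - u1) * (p - u2) * (p - u4) + (p - u1) * (p - u2) * (p - u3)) / 2.
Proof. destruct H4 as [_ [_ [_ HQ]]]. destruct (coeffs _ _ _ _ _ _ _ HQ) as [e1 [ec [eb _]]].
  rewrite ec, eb. rewrite e1. field. Qed.

Lemma phi_sol_solution : is_solution b c d (phi_sol u1 u2 u3 u4).
Proof.
  pose proof k2_lt1 as Hk. pose proof ord as Ho.
  set (phi := phi_sol u1 u2 u3 u4).
  exists (fun x => G1 u2 u3 u4 nu k (jam k (nu * x))).
  exists (fun x => 2 * phi x ^ 3 - c * phi x + b).
  exists (fun x => (6 * phi x ^ 2 - c) * G1 u2 u3 u4 nu k (jam k (nu * x))).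
  assert (Hd1 : forall x, is_derive phi x (G1 u2 u3 u4 nu k (jam k (nu * x)))).
  { intros x.
    pose proof (is_derive_comp (Gth u2 u3 u4) (fun x => jam k (nu * x)) x _ _
      (Gth_derive u2 u3 u4 _ (den_ne _)) (th_derive x)) as H.
    eapply deriv_val. apply H. unfold G1. change (scal ?a ?b) with (a * b).
    pose proof (den_ne (jam k (nu * x))). field. auto. }
  assert (Hd2 : forall x, is_derive (fun x => G1 u2 u3 u4 nu k (jam k (nu * x))) x
     (2 * phi x ^ 3 - c * phi x + b)).
  { intros x.
    pose proof (is_derive_comp (G1 u2 u3 u4 nu k) (fun x => jam k (nu * x)) x _ _
      (G1_derive u2 u3 u4 nu k _ Hk (den_ne _)) (th_derive x)) as H.
    eapply deriv_val. apply H. change (scal ?a ?b) with (a * b).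
    rewrite Qd_eq. set (th := jam k (nu * x)).
    unfold phi. rewrite phi_sol_eq. fold th. unfold Gth.
    pose proof (fk_arg_pos k th Hk).
    assert (HS : 0 < dn k th) by (apply sqrt_lt_R0; auto).
    rewrite Rmult_comm. unfold G1d; cbv zeta.
    apply (alg_ODE u1 u2 u3 u4 nu k (sin th) (cos th) (dn k th)).
    - apply cos2.
    - unfold dn. rewrite pow2_sqrt; lra.
    - apply k2_eq.
    - apply nu2_eq.
    - lra.
    - pose proof Ho. nra.
    - apply den_ne. }
  intros x. split; [apply Hd1|]. split; [apply Hd2|]. split.
  { eapply deriv_val.
    apply (is_derive_comp (fun y => 2 * y ^ 3 - c * y + b) phi x). 2: apply Hd1.
    auto_derive; auto. change (scal ?a ?b) with (a * b). ring. }
  split; [ring|]. split; [ring|].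
  destruct H4 as [_ [_ [_ HQ]]]. rewrite HQ.
  unfold phi. rewrite phi_sol_eq. set (th := jam k (nu * x)). unfold G1, Gth.
  pose proof (fk_arg_pos k th Hk).
  replace (2 * (u2 - u4) * (u2 - u3) * (u3 - u4) * nu * sin th * cos th * dn k th /
    (u2 - u4 - (u2 - u3) * sin th ^ 2) ^ 2) with
    (2 * (u2 - u4) * (u2 - u3) * (u3 - u4) * nu * sin th * cos th * dn k th /
    (u2 - u4 - (u2 - u3) * sin th ^ 2) ^ 2) by reflexivity.
  apply (alg_Q u1 u2 u3 u4 nu k (sin th) (cos th) (dn k th)).
  - apply cos2.
  - unfold dn. rewrite pow2_sqrt; lra.
  - apply k2_eq.
  - apply nu2_eq.
  - pose proof Ho. nra.
  - apply den_ne.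
Qed.

Lemma Gth_u3 th : Gth u2 u3 u4 th - u3 = (u2 - u3) * (u3 - u4) * sin th ^ 2 / ((u2 - u4) - (u2 - u3) * sin th ^ 2).
Proof. unfold Gth. pose proof (den_ne th). field. auto. Qed.
Lemma Gth_u2 th : u2 - Gth u2 u3 u4 th = (u2 - u4) * (u2 - u3) * cos th ^ 2 / ((u2 - u4) - (u2 - u3) * sin th ^ 2).
Proof. unfold Gth. pose proof (den_ne th). rewrite cos2. field. auto. Qed.

Lemma Gth_range th : u3 <= Gth u2 u3 u4 th <= u2.
Proof. pose proof ord. pose proof (den_ge th). pose proof (Gth_u3 th). pose proof (Gth_u2 th).
  assert (0 <= (u2 - u3) * (u3 - u4) * sin th ^ 2 / ((u2 - u4) - (u2 - u3) * sin th ^ 2)).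
  { apply Rmult_le_pos. apply Rmult_le_pos. nra. apply pow2_ge_0. apply Rlt_le, Rinv_0_lt_compat. lra. }
  assert (0 <= (u2 - u4) * (u2 - u3) * cos th ^ 2 / ((u2 - u4) - (u2 - u3) * sin th ^ 2)).
  { apply Rmult_le_pos. apply Rmult_le_pos. nra. apply pow2_ge_0. apply Rlt_le, Rinv_0_lt_compat. lra. }
  lra. Qed.

Lemma phi_range x : u3 <= phi_sol u1 u2 u3 u4 x <= u2.
Proof. rewrite phi_sol_eq. apply Gth_range. Qed.

Lemma Gth_eq_u3 th : Gth u2 u3 u4 th = u3 -> sin th = 0.
Proof. intros H. pose proof ord. pose proof (Gth_u3 th). rewrite H, Rminus_diag in H1.
  pose proof (den_ne th). assert ((u2 - u3) * (u3 - u4) * sin th ^ 2 = 0).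
  { set (X := (u2 - u3) * (u3 - u4) * sin th ^ 2) in *.
    set (Dn := (u2 - u4) - (u2 - u3) * sin th ^ 2) in *.
    assert (X = (X / Dn) * Dn) by (field; auto). rewrite <- H1 in H3. lra. }
  apply Rmult_integral in H3. destruct H3. nra. nra. Qed.

Lemma Gth_shift th : Gth u2 u3 u4 (th + PI) = Gth u2 u3 u4 th.
Proof. unfold Gth. rewrite neg_sin. f_equal. f_equal. f_equal. ring. Qed.

Lemma phi_0 : phi_sol u1 u2 u3 u4 0 = u3.
Proof. rewrite phi_sol_eq, Rmult_0_r, jam_0 by apply k2_lt1. unfold Gth. rewrite sin_0.
  pose proof ord. field. lra. Qed.

Lemma phi_L : phi_sol u1 u2 u3 u4 (ellK k / nu) = u2.
Proof. pose proof nu_pos. rewrite phi_sol_eq. replace (nu * (ellK k / nu)) with (ellK k) by (field; lra).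
  rewrite jam_K by apply k2_lt1. unfold Gth. rewrite sin_PI2. pose proof ord. field. lra. Qed.

Lemma phi_mL : phi_sol u1 u2 u3 u4 (- (ellK k / nu)) = u2.
Proof. pose proof nu_pos. rewrite phi_sol_eq. replace (nu * - (ellK k / nu)) with (- ellK k) by (field; lra).
  rewrite jam_mK by apply k2_lt1. unfold Gth. rewrite sin_neg, sin_PI2. pose proof ord. field. lra. Qed.

Lemma phi_period : is_period (phi_sol u1 u2 u3 u4) (2 * ellK k / nu).
Proof. pose proof nu_pos. pose proof (ellK_pos k k2_lt1). pose proof PI_RGT_0. split.
  - apply Rdiv_lt_0_compat; lra.
  - intros x. rewrite !phi_sol_eq. replace (nu * (x + 2 * ellK k / nu)) with (nu * x + 2 * ellK k) by (field; lra).
    rewrite jam_shift by apply k2_lt1. apply Gth_shift. Qed.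

Lemma phi_fund : fundamental_period (phi_sol u1 u2 u3 u4) (2 * ellK k / nu).
Proof. split. apply phi_period. intros T' [h1 h2] [_ Hp].
  pose proof nu_pos. pose proof (ellK_pos k k2_lt1). pose proof PI_RGT_0. pose proof k2_lt1.
  specialize (Hp 0). rewrite Rplus_0_l, phi_0 in Hp. rewrite phi_sol_eq in Hp.
  apply Gth_eq_u3 in Hp.
  assert (0 < nu * T') by nra. assert (nu * T' < 2 * ellK k).
  { apply Rmult_lt_compat_l with (r := nu) in h2; auto. replace (nu * (2 * ellK k / nu)) with (2 * ellK k) in h2 by (field; lra). lra. }
  pose proof (jam_mono k 0 (nu * T') H2 H3). pose proof (jam_mono k (nu * T') (2 * ellK k) H2 H5).
  rewrite jam_0 in H6 by auto. rewrite jam_2K in H7 by auto.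
  pose proof (sin_gt_0 _ H6 H7). lra. Qed.

Lemma phi_bounded : bounded_fun (phi_sol u1 u2 u3 u4).
Proof. exists (Rabs u2 + Rabs u3). intros x. pose proof (phi_range x).
  unfold Rabs; repeat destruct Rcase_abs; lra. Qed.

Lemma phi_nonconst : nonconstant (phi_sol u1 u2 u3 u4).
Proof. exists 0, (ellK k / nu). rewrite phi_0, phi_L. pose proof ord. lra. Qed.

End Sol.

Lemma deriv_val' (f : R -> R) (x l l' : R) : is_derive f x l -> @eq R l l' -> is_derive f x l'.
Proof. intros H e; subst; auto. Qed.

Lemma nonincr (h h' : R -> R) : (forall x, is_derive h x (h' x)) -> (forall x, h' x <= 0) ->
  forall a b, a <= b -> h b <= h a.
Proof. intros Hd Hn a b Hab. destruct Hab as [Hab|Hab]; [|subst; lra].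
  destruct (MVT_cor2 h h' a b Hab) as [c0 [E _]].
  - intros; apply is_derive_Reals; auto.
  - specialize (Hn c0). nra. Qed.

Lemma nondecr (h h' : R -> R) : (forall x, is_derive h x (h' x)) -> (forall x, 0 <= h' x) ->
  forall a b, a <= b -> h a <= h b.
Proof. intros Hd Hn a b Hab. destruct Hab as [Hab|Hab]; [|subst; lra].
  destruct (MVT_cor2 h h' a b Hab) as [c0 [E _]].
  - intros; apply is_derive_Reals; auto.
  - specialize (Hn c0). nra. Qed.

Lemma ode_unique (b c : R) (y z y1 z1 : R -> R) (M x0 : R) :
  (forall x, is_derive y x (y1 x)) -> (forall x, is_derive y1 x (2 * y x ^ 3 - c * y x + b)) ->
  (forall x, is_derive z x (z1 x)) -> (forall x, is_derive z1 x (2 * z x ^ 3 - c * z x + b)) ->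
  (forall x, Rabs (y x) <= M) -> (forall x, Rabs (z x) <= M) ->
  y x0 = z x0 -> y1 x0 = z1 x0 -> forall x, y x = z x.
Proof.
  intros Hy Hy1 Hz Hz1 By Bz e0 e1 x.
  set (K := 1 + 6 * M ^ 2 + Rabs c).
  set (E := fun x => (y x - z x) ^ 2 + (y1 x - z1 x) ^ 2).
  set (E' := fun x => 2 * (y x - z x) * (y1 x - z1 x) * (1 + (2 * (y x ^ 2 + y x * z x + z x ^ 2) - c))).
  assert (HE : forall x, is_derive E x (E' x)).
  { intros t. unfold E, E'. eapply deriv_val'.
    - apply (is_derive_plus (fun x => (y x - z x) ^ 2) (fun x => (y1 x - z1 x) ^ 2)).
      + apply (is_derive_comp (fun u => u ^ 2) (fun x => y x - z x)). auto_derive; auto.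
        apply (is_derive_minus y z); auto.
      + apply (is_derive_comp (fun u => u ^ 2) (fun x => y1 x - z1 x)). auto_derive; auto.
        apply (is_derive_minus y1 z1); auto.
    - change (plus ?a ?b) with (a + b). change (scal ?a ?b) with (a * b).
      change (minus ?a ?b) with (a - b). ring. }
  assert (HB : forall x, - (K * E x) <= E' x <= K * E x).
  { intros t. unfold E, E'. set (h := 1 + (2 * (y t ^ 2 + y t * z t + z t ^ 2) - c)).
    assert (-K <= h <= K).
    { pose proof (By t). pose proof (Bz t).
      assert (-M <= y t <= M) by (revert H; unfold Rabs; destruct Rcase_abs; lra).
      assert (-M <= z t <= M) by (revert H0; unfold Rabs; destruct Rcase_abs; lra).
      unfold h, K. pose proof (Rabs_pos c).
      assert (-Rabs c <= c <= Rabs c) by (unfold Rabs; destruct Rcase_abs; lra).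
      assert (y t ^ 2 <= M ^ 2) by nra. assert (z t ^ 2 <= M ^ 2) by nra.
      assert (0 <= (y t - z t) ^ 2) by apply pow2_ge_0.
      assert (0 <= (y t + z t / 2) ^ 2) by apply pow2_ge_0.
      assert (0 <= y t ^ 2 + y t * z t + z t ^ 2 <= 3 * M ^ 2) by nra. lra. }
    set (w := y t - z t). set (v := y1 t - z1 t).
    assert (0 <= (K + h) * (w - v) ^ 2) by (apply Rmult_le_pos; [lra|apply pow2_ge_0]).
    assert (0 <= (K - h) * (w - v) ^ 2) by (apply Rmult_le_pos; [lra|apply pow2_ge_0]).
    assert (0 <= (K + h) * (w + v) ^ 2) by (apply Rmult_le_pos; [lra|apply pow2_ge_0]).
    assert (0 <= (K - h) * (w + v) ^ 2) by (apply Rmult_le_pos; [lra|apply pow2_ge_0]).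
    split; nra. }
  assert (E0 : E x0 = 0). { unfold E. rewrite e0, e1. ring. }
  assert (Epos : forall t, 0 <= E t). { intros t. unfold E. pose proof (pow2_ge_0 (y t - z t)); pose proof (pow2_ge_0 (y1 t - z1 t)); lra. }
  assert (Ex : E x = 0).
  { destruct (Rle_or_lt x0 x) as [h|h].
    - set (h1 := fun t => E t * exp (- K * t)).
      assert (forall t, is_derive h1 t ((E' t - K * E t) * exp (- K * t))).
      { intros t. unfold h1. eapply deriv_val'.
        apply (is_derive_mult E (fun t => exp (- K * t))). apply HE.
        auto_derive; auto. intros; apply Rmult_comm.
        change (plus ?a ?b) with (a + b). change (mult ?a ?b) with (a * b). ring. }
      pose proof (nonincr h1 _ H). assert (h1 x <= h1 x0).
      { apply H0; auto. intros t. pose proof (HB t). pose proof (exp_pos (-K * t)). nra. }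
      unfold h1 in H1. rewrite E0 in H1. pose proof (exp_pos (-K * x)). pose proof (Epos x). nra.
    - set (h1 := fun t => E t * exp (K * t)).
      assert (forall t, is_derive h1 t ((E' t + K * E t) * exp (K * t))).
      { intros t. unfold h1. eapply deriv_val'.
        apply (is_derive_mult E (fun t => exp (K * t))). apply HE.
        auto_derive; auto. intros; apply Rmult_comm.
        change (plus ?a ?b) with (a + b). change (mult ?a ?b) with (a * b). ring. }
      pose proof (nondecr h1 _ H). assert (h1 x <= h1 x0).
      { apply H0; try lra. intros t. pose proof (HB t). pose proof (exp_pos (K * t)). nra. }
      unfold h1 in H1. rewrite E0 in H1. pose proof (exp_pos (K * x)). pose proof (Epos x). nra. }
  unfold E in Ex. pose proof (pow2_ge_0 (y x - z x)); pose proof (pow2_ge_0 (y1 x - z1 x)).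
  assert ((y x - z x) ^ 2 = 0) by lra. assert (y x - z x = 0) by nra. lra.
Qed.

Lemma nat_unbounded (A : R) : exists n : nat, A < INR n.
Proof. destruct (archimed A) as [H _]. destruct (Z_lt_le_dec 0 (up A)) as [h|h].
  - exists (Z.to_nat (up A)). rewrite INR_IZR_INZ, Z2Nat.id by lia. auto.
  - exists 0%nat. simpl. apply IZR_le in h. lra. Qed.

Lemma sol2 b c d psi : is_solution b c d psi -> exists psi1 : R -> R,
  (forall x, is_derive psi x (psi1 x)) /\
  (forall x, is_derive psi1 x (2 * psi x ^ 3 - c * psi x + b)) /\
  (forall x, psi1 x ^ 2 = Qpoly b c d (psi x)).
Proof. intros [p1 [p2 [p3 H]]]. exists p1. split; [|split]; intros x; destruct (H x) as [h1 [h2 [h3 [h4 [h5 h6]]]]]; auto.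
  eapply deriv_val'. apply h2. lra. Qed.

Lemma cont_of_deriv (f f1 : R -> R) : (forall x, is_derive f x (f1 x)) -> continuity f.
Proof. intros H x. apply derivable_continuous_pt. exists (f1 x). apply is_derive_Reals; auto. Qed.

Lemma per_nat (f : R -> R) T : (forall x, f (x + T) = f x) -> forall (n : nat) x, f (x + INR n * T) = f x.
Proof. intros H n. induction n; intros x. simpl. f_equal; ring.
  rewrite S_INR. replace (x + (INR n + 1) * T) with ((x + INR n * T) + T) by ring. rewrite H. auto. Qed.

Lemma per_reduce (f : R -> R) T : is_period f T -> forall x, exists x', 0 <= x' <= T /\ f x = f x'.
Proof. intros [HT H].
  assert (A : forall (n : nat) y, 0 <= y <= INR n * T -> exists x', 0 <= x' <= T /\ f y = f x').
  { induction n; intros y Hy.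
    - simpl in Hy. exists y. split; [lra|auto].
    - destruct (Rle_or_lt y T). exists y; split; [lra|auto].
      rewrite S_INR in Hy. destruct (IHn (y - T)) as [x' [h1 h2]]. lra.
      exists x'. split; auto. rewrite <- h2. rewrite <- (H (y - T)). f_equal; ring. }
  intros x. destruct (nat_unbounded (Rabs x / T)) as [n Hn].
  assert (Rabs x < INR n * T).
  { apply Rmult_lt_compat_r with (r := T) in Hn; auto. unfold Rdiv in Hn.
    rewrite Rmult_assoc, Rinv_l, Rmult_1_r in Hn; lra. }
  destruct (A (n + n)%nat (x + INR n * T)) as [x' [h1 h2]].
  { rewrite plus_INR. unfold Rabs in H0; destruct Rcase_abs; nra. }
  exists x'. split; auto. rewrite <- h2. symmetry. apply per_nat; auto. Qed.

Lemma deriv_zero_min (f f1 : R -> R) x0 : (forall x, is_derive f x (f1 x)) ->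
  (forall x, f x0 <= f x) -> f1 x0 = 0.
Proof. intros Hd Hm. assert (pr : derivable_pt f x0) by (exists (f1 x0); apply is_derive_Reals; auto).
  pose proof (deriv_minimum f (x0 - 1) (x0 + 1) x0 pr ltac:(lra) ltac:(lra) (fun x _ _ => Hm x)).
  rewrite <- H. symmetry. apply derive_pt_eq_0. apply is_derive_Reals; auto. Qed.

Lemma deriv_zero_max (f f1 : R -> R) x0 : (forall x, is_derive f x (f1 x)) ->
  (forall x, f x <= f x0) -> f1 x0 = 0.
Proof. intros Hd Hm. assert (pr : derivable_pt f x0) by (exists (f1 x0); apply is_derive_Reals; auto).
  pose proof (deriv_maximum f (x0 - 1) (x0 + 1) x0 pr ltac:(lra) ltac:(lra) (fun x _ _ => Hm x)).
  rewrite <- H. symmetry. apply derive_pt_eq_0. apply is_derive_Reals; auto. Qed.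

Lemma per_extrema (f : R -> R) : continuity f -> periodic_fun f ->
  exists xm xM, forall x, f xm <= f x <= f xM.
Proof. intros Hc [T HT]. pose proof (per_reduce f T HT). destruct HT as [HT _].
  destruct (continuity_ab_min f 0 T ltac:(lra) (fun c _ => Hc c)) as [xm [Hm _]].
  destruct (continuity_ab_maj f 0 T ltac:(lra) (fun c _ => Hc c)) as [xM [HM _]].
  exists xm, xM. intros x. destruct (H x) as [x' [h1 h2]]. rewrite h2. auto. Qed.

Lemma ivt_val (f : R -> R) a b p : continuity f -> f a <= p <= f b -> exists x, f x = p.
Proof. intros Hc Hp. destruct (Rle_or_lt a b).
  - destruct (IVT_cor (fun x => f x - p) a b) as [z [_ Hz]]; auto.
    intros x; apply continuity_pt_minus; auto. apply continuity_pt_const; intros u v; auto.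
    nra. exists z; lra.
  - destruct (IVT_cor (fun x => f x - p) b a) as [z [_ Hz]]; auto.
    intros x; apply continuity_pt_minus; auto. apply continuity_pt_const; intros u v; auto.
    lra. nra. exists z; lra. Qed.

Lemma sol_analysis b c d psi : is_solution b c d psi -> periodic_fun psi -> nonconstant psi ->
  exists psi1 xm xM, (forall x, is_derive psi x (psi1 x)) /\
  (forall x, is_derive psi1 x (2 * psi x ^ 3 - c * psi x + b)) /\
  (forall x, psi1 x ^ 2 = Qpoly b c d (psi x)) /\
  (forall x, psi xm <= psi x <= psi xM) /\ psi xm < psi xM /\
  psi1 xm = 0 /\ psi1 xM = 0 /\
  Qpoly b c d (psi xm) = 0 /\ Qpoly b c d (psi xM) = 0 /\
  (forall p, psi xm <= p <= psi xM -> 0 <= Qpoly b c d p).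
Proof. intros Hs Hp [x1 [x2 Hnc]]. destruct (sol2 _ _ _ _ Hs) as [psi1 [H1 [H2 H3]]].
  pose proof (cont_of_deriv _ _ H1) as Hc.
  destruct (per_extrema psi Hc Hp) as [xm [xM Hm]].
  exists psi1, xm, xM.
  assert (e1 : psi1 xm = 0) by (apply (deriv_zero_min psi psi1); auto; intros; apply Hm).
  assert (e2 : psi1 xM = 0) by (apply (deriv_zero_max psi psi1); auto; intros; apply Hm).
  refine (conj H1 (conj H2 (conj H3 (conj Hm (conj _ (conj e1 (conj e2 (conj _ (conj _ _))))))))).
  - destruct (Hm x1), (Hm x2). destruct (Req_dec (psi xm) (psi xM)); [|lra]. exfalso; apply Hnc; lra.
  - rewrite <- H3, e1. ring.
  - rewrite <- H3, e2. ring.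
  - intros p Hp'. destruct (ivt_val psi xm xM p Hc Hp') as [x Hx]. rewrite <- Hx, <- H3.
    apply pow2_ge_0. Qed.

Lemma mul_eq0_l a b : a <> 0 -> a * b = 0 -> b = 0.
Proof. intros h e. apply Rmult_integral in e. destruct e; [contradiction|auto]. Qed.

Lemma quad_factor a b r s : r <> s -> r ^ 2 + a * r + b = 0 -> s ^ 2 + a * s + b = 0 ->
  forall p, p ^ 2 + a * p + b = (p - r) * (p - s).
Proof. intros h hr hs p.
  assert (ea : a = -(r + s)).
  { assert ((r - s) * (r + s + a) = 0).
    { replace ((r - s) * (r + s + a)) with ((r ^ 2 + a * r + b) - (s ^ 2 + a * s + b)) by ring. lra. }
    apply mul_eq0_l in H; [lra|]. intro; apply h; lra. }
  assert (eb : b = r * s) by (subst a; nra).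
  subst; ring. Qed.

Lemma cubic_factor a b c r s t : r <> s -> r <> t -> s <> t ->
  r ^ 3 + a * r ^ 2 + b * r + c = 0 -> s ^ 3 + a * s ^ 2 + b * s + c = 0 ->
  t ^ 3 + a * t ^ 2 + b * t + c = 0 ->
  forall p, p ^ 3 + a * p ^ 2 + b * p + c = (p - r) * (p - s) * (p - t).
Proof. intros h1 h2 h3 hr hs ht.
  assert (E : forall p, p ^ 3 + a * p ^ 2 + b * p + c = (p - r) * (p ^ 2 + (a + r) * p + (b + r * (a + r)))).
  { intros p. replace c with (- (r ^ 3 + a * r ^ 2 + b * r)) by lra. ring. }
  assert (Hs : s ^ 2 + (a + r) * s + (b + r * (a + r)) = 0).
  { apply (mul_eq0_l (s - r)). intro; apply h1; lra. rewrite <- E. auto. }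
  assert (Ht : t ^ 2 + (a + r) * t + (b + r * (a + r)) = 0).
  { apply (mul_eq0_l (t - r)). intro; apply h2; lra. rewrite <- E. auto. }
  intros p. rewrite E, (quad_factor _ _ s t h3 Hs Ht p). ring. Qed.

Lemma quartic_factor b c d r1 r2 r3 r4 : r1 <> r2 -> r1 <> r3 -> r1 <> r4 -> r2 <> r3 -> r2 <> r4 -> r3 <> r4 ->
  Qpoly b c d r1 = 0 -> Qpoly b c d r2 = 0 -> Qpoly b c d r3 = 0 -> Qpoly b c d r4 = 0 ->
  forall p, Qpoly b c d p = (p - r1) * (p - r2) * (p - r3) * (p - r4).
Proof. intros h12 h13 h14 h23 h24 h34 q1 q2 q3 q4.
  assert (E : forall p, Qpoly b c d p = (p - r1) * (p ^ 3 + r1 * p ^ 2 + (r1 ^ 2 - c) * p + (r1 ^ 3 - c * r1 + 2 * b))).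
  { intros p. unfold Qpoly in *. replace (2 * d) with (- (r1 ^ 4 - c * r1 ^ 2 + 2 * b * r1)) by lra. ring. }
  assert (H2 : r2 ^ 3 + r1 * r2 ^ 2 + (r1 ^ 2 - c) * r2 + (r1 ^ 3 - c * r1 + 2 * b) = 0).
  { apply (mul_eq0_l (r2 - r1)). intro; apply h12; lra. rewrite <- E. auto. }
  assert (H3 : r3 ^ 3 + r1 * r3 ^ 2 + (r1 ^ 2 - c) * r3 + (r1 ^ 3 - c * r1 + 2 * b) = 0).
  { apply (mul_eq0_l (r3 - r1)). intro; apply h13; lra. rewrite <- E. auto. }
  assert (H4 : r4 ^ 3 + r1 * r4 ^ 2 + (r1 ^ 2 - c) * r4 + (r1 ^ 3 - c * r1 + 2 * b) = 0).
  { apply (mul_eq0_l (r4 - r1)). intro; apply h14; lra. rewrite <- E. auto. }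
  intros p. rewrite E, (cubic_factor _ _ _ r2 r3 r4 h23 h24 h34 H2 H3 H4 p). ring. Qed.

Lemma roots_from_interval b c d m M : m < M -> Qpoly b c d m = 0 -> Qpoly b c d M = 0 ->
  (forall p, m <= p <= M -> 0 <= Qpoly b c d p) ->
  2 * m ^ 3 - c * m + b <> 0 -> 2 * M ^ 3 - c * M + b <> 0 ->
  four_distinct_real_roots b c d.
Proof. intros hmM qm qM hpos nm nM.
  set (s := m + M).
  assert (eb : b = (c * s - s * (m ^ 2 + M ^ 2)) / 2).
  { assert ((m - M) * (s * (m ^ 2 + M ^ 2) - c * s + 2 * b) = 0).
    { replace ((m - M) * (s * (m ^ 2 + M ^ 2) - c * s + 2 * b)) with (Qpoly b c d m - Qpoly b c d M)
        by (unfold Qpoly, s; ring). lra. }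
    apply mul_eq0_l in H; [lra|lra]. }
  set (g := m ^ 2 + M ^ 2 - c).
  set (gam := s ^ 2 - m * M - c).
  assert (EQ : forall p, Qpoly b c d p = (p - m) * (p - M) * (p ^ 2 + s * p + gam)).
  { intros p. unfold Qpoly in *. replace (2 * d) with (- (m ^ 4 - c * m ^ 2 + 2 * b * m)) by lra.
    rewrite eb. unfold gam, s. field. }
  assert (gm : 2 * (2 * m ^ 3 - c * m + b) = (m - M) * (m ^ 2 + s * m + gam)).
  { rewrite eb. unfold gam, s. field. }
  assert (gM : 2 * (2 * M ^ 3 - c * M + b) = (M - m) * (M ^ 2 + s * M + gam)).
  { rewrite eb. unfold gam, s. field. }
  assert (gm0 : m ^ 2 + s * m + gam <> 0). { intro h. rewrite h in gm. apply nm. lra. }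
  assert (gM0 : M ^ 2 + s * M + gam <> 0). { intro h. rewrite h in gM. apply nM. lra. }
  assert (gneg : forall p, m < p < M -> p ^ 2 + s * p + gam <= 0).
  { intros p hp. pose proof (hpos p ltac:(lra)). rewrite EQ in H.
    assert ((p - m) * (p - M) < 0) by nra. nra. }
  set (Dl := s ^ 2 - 4 * gam).
  assert (HD : 0 <= Dl).
  { pose proof (gneg ((m + M) / 2) ltac:(lra)). unfold Dl.
    assert (0 <= ((m + M) / 2 + s / 2) ^ 2) by apply pow2_ge_0. nra. }
  set (sq := sqrt Dl). assert (hsq : sq ^ 2 = Dl) by (apply pow2_sqrt; auto).
  assert (sq0 : 0 <= sq) by apply sqrt_pos.
  set (r1 := (- s - sq) / 2). set (r2 := (- s + sq) / 2).
  assert (Eg : forall p, p ^ 2 + s * p + gam = (p - r1) * (p - r2)).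
  { intros p. unfold r1, r2. replace gam with ((s ^ 2 - Dl) / 4) by (unfold Dl; field).
    rewrite <- hsq. field. }
  assert (r12 : r1 <= r2) by (unfold r1, r2; lra).
  assert (h1 : r1 < m).
  { destruct (Rlt_or_le r1 m) as [h|h]; auto. exfalso.
    destruct h as [h|h].
    - set (p := (m + Rmin r1 M) / 2).
      assert (m < p < M /\ p < r1) by (unfold p, Rmin; destruct Rle_dec; lra).
      pose proof (gneg p ltac:(lra)). rewrite Eg in H0. nra.
    - apply gm0. rewrite Eg, <- h. ring. }
  assert (h2 : M < r2).
  { destruct (Rlt_or_le M r2) as [h|h]; auto. exfalso.
    destruct h as [h|h].
    - set (p := (Rmax r2 m + M) / 2).
      assert (m < p < M /\ r2 < p) by (unfold p, Rmax; destruct Rle_dec; lra).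
      pose proof (gneg p ltac:(lra)). rewrite Eg in H0. nra.
    - apply gM0. rewrite Eg, h. ring. }
  exists r2, M, m, r1. split; [lra|split; [lra|split; [lra|]]].
  intros p. rewrite EQ, Eg. ring. Qed.

Lemma Q_derive b c d p : is_derive (Qpoly b c d) p (4 * p ^ 3 - 2 * c * p + 2 * b).
Proof. unfold Qpoly. auto_derive; auto. ring. Qed.

Lemma rolle_Q b c d x y : x < y -> Qpoly b c d x = 0 -> Qpoly b c d y = 0 ->
  exists z, x < z < y /\ 2 * z ^ 3 - c * z + b = 0.
Proof. intros h qx qy.
  destruct (MVT_cor2 (Qpoly b c d) (fun p => 4 * p ^ 3 - 2 * c * p + 2 * b) x y h) as [z [E hz]].
  - intros; apply is_derive_Reals, Q_derive.
  - exists z. split; auto. rewrite qx, qy in E. assert ((4 * z ^ 3 - 2 * c * z + 2 * b) = 0).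
    { apply (mul_eq0_l (y - x)). lra. lra. } lra. Qed.

Lemma cubic_coeffs c b x1 x2 x3 :
  (forall p, p ^ 3 + 0 * p ^ 2 + (- c / 2) * p + b / 2 = (p - x1) * (p - x2) * (p - x3)) ->
  x3 = - (x1 + x2) /\ c = - 2 * (x1 * x2 + x1 * x3 + x2 * x3) /\ b = - 2 * (x1 * x2 * x3).
Proof. intros H. pose proof (H 0). pose proof (H 1). pose proof (H (-1)). repeat split; nra. Qed.

Lemma bcrit_sq c : 0 < c -> b_crit c ^ 2 = 2 * c ^ 3 / 27 /\ 0 < b_crit c.
Proof. intros hc. unfold b_crit. assert (0 < 2 * c ^ 3) by (apply Rmult_lt_0_compat; [lra|apply pow_lt; auto]).
  assert (0 < sqrt 27) by (apply sqrt_lt_R0; lra). assert (0 < sqrt (2 * c ^ 3)) by (apply sqrt_lt_R0; lra).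
  split. unfold Rdiv. rewrite Rpow_mult_distr, pow2_sqrt, pow_inv, pow2_sqrt; lra.
  apply Rdiv_lt_0_compat; auto. Qed.

Lemma omega_of_roots b c d : four_distinct_real_roots b c d -> in_Omega b c.
Proof. intros [u1 [u2 [u3 [u4 [h43 [h32 [h21 HQ]]]]]]].
  assert (q1 : Qpoly b c d u1 = 0) by (rewrite HQ; ring).
  assert (q2 : Qpoly b c d u2 = 0) by (rewrite HQ; ring).
  assert (q3 : Qpoly b c d u3 = 0) by (rewrite HQ; ring).
  assert (q4 : Qpoly b c d u4 = 0) by (rewrite HQ; ring).
  destruct (rolle_Q b c d u4 u3 h43 q4 q3) as [x1 [hx1 ex1]].
  destruct (rolle_Q b c d u3 u2 h32 q3 q2) as [x2 [hx2 ex2]].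
  destruct (rolle_Q b c d u2 u1 h21 q2 q1) as [x3 [hx3 ex3]].
  assert (F := cubic_factor 0 (- c / 2) (b / 2) x1 x2 x3 ltac:(lra) ltac:(lra) ltac:(lra)
    ltac:(lra) ltac:(lra) ltac:(lra)).
  destruct (cubic_coeffs c b x1 x2 x3 F) as [e3 [ec eb]].
  assert (disc : 2 * c ^ 3 - 27 * b ^ 2 = 4 * ((x1 - x2) * (x1 - x3) * (x2 - x3)) ^ 2).
  { rewrite ec, eb, e3. ring. }
  assert (0 < ((x1 - x2) * (x1 - x3) * (x2 - x3)) ^ 2).
  { assert (0 < (x1 - x2) * (x1 - x3)) by nra.
    assert ((x1 - x2) * (x1 - x3) * (x2 - x3) < 0).
    { assert (x2 - x3 < 0) by lra. nra. }
    nra. }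
  assert (hc : 0 < c).
  { rewrite ec, e3. assert (0 < (x2 - x1) ^ 2) by (apply pow_lt; lra).
    assert (0 <= (x1 + x2) ^ 2) by apply pow2_ge_0. nra. }
  destruct (bcrit_sq c hc) as [hb hb0].
  split; auto. assert (b ^ 2 < b_crit c ^ 2) by (rewrite hb; lra). nra. Qed.

Lemma poly_big a C B D : 1 + C + 2 * B + 2 * D <= a -> 0 <= C -> 0 <= B -> 0 <= D ->
  0 < a ^ 4 - C * a ^ 2 - 2 * B * a - 2 * D.
Proof. intros h hC hB hD. assert (1 <= a) by lra.
  assert (a <= a ^ 2) by nra. assert (a ^ 2 <= a ^ 3) by nra.
  assert (a ^ 4 >= a ^ 3 * (1 + C + 2 * B + 2 * D)) by nra.
  assert (C * a ^ 2 <= C * a ^ 3) by nra. assert (B * a <= B * a ^ 3) by nra.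
  assert (D <= D * a ^ 3) by nra. nra. Qed.

Lemma Q_big b c d p : 1 + Rabs c + 2 * Rabs b + 2 * Rabs d <= Rabs p -> 0 < Qpoly b c d p.
Proof. intros h. pose proof (poly_big (Rabs p) (Rabs c) (Rabs b) (Rabs d) h (Rabs_pos _) (Rabs_pos _) (Rabs_pos _)).
  unfold Qpoly. assert (p ^ 2 = Rabs p ^ 2) by (rewrite <- pow2_abs; auto).
  assert (p ^ 4 = Rabs p ^ 4) by (replace 4%nat with (2*2)%nat by auto; rewrite !pow_mult, H0; auto).
  assert (c * p ^ 2 <= Rabs c * Rabs p ^ 2).
  { rewrite H0. apply Rmult_le_compat_r. apply pow2_ge_0. apply Rle_abs. }
  assert (- (Rabs b * Rabs p) <= b * p).
  { rewrite <- Rabs_mult. pose proof (Rabs_le_between' (b*p) 0 (Rabs (b*p))). 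
    unfold Rabs at 1; destruct Rcase_abs; lra. }
  assert (- Rabs d <= d) by (unfold Rabs; destruct Rcase_abs; lra).
  nra. Qed.

Lemma poly_cont (f f1 : R -> R) : (forall x, is_derive f x (f1 x)) -> continuity f.
Proof. apply cont_of_deriv. Qed.

Lemma ivt_loc (f f1 : R -> R) a b : (forall x, is_derive f x (f1 x)) -> a <= b -> f a * f b <= 0 ->
  exists z, a <= z <= b /\ f z = 0.
Proof. intros H h1 h2. destruct (IVT_cor f a b (poly_cont f f1 H) h1 h2) as [z hz]. exists z; auto. Qed.

Lemma roots_of_omega b c : in_Omega b c -> exists d, four_distinct_real_roots b c d.
Proof. intros [hc [hb1 hb2]]. destruct (bcrit_sq c hc) as [hbc hbc0].
  set (h := fun p => 2 * p ^ 3 - c * p + b).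
  assert (hd : forall x, is_derive h x (6 * x ^ 2 - c)) by (intros; unfold h; auto_derive; auto; ring).
  set (r := sqrt (c / 6)).
  assert (hr : r ^ 2 = c / 6) by (apply pow2_sqrt; lra).
  assert (hr0 : 0 < r) by (apply sqrt_lt_R0; lra).
  assert (e : 2 * c / 3 * r = b_crit c).
  { assert ((2 * c / 3 * r) ^ 2 = b_crit c ^ 2) by (rewrite hbc; replace ((2 * c / 3 * r) ^ 2) with (4 * c^2/9 * r ^ 2) by field; rewrite hr; field).
    assert (0 < 2 * c / 3 * r) by (apply Rmult_lt_0_compat; lra). nra. }
  assert (hmr : h (- r) > 0). { unfold h. replace (2 * (- r) ^ 3 - c * - r + b) with (b + (c - 2 * r ^ 2) * r) by ring. rewrite hr.
    replace ((c - 2 * (c / 6)) * r) with (2 * c / 3 * r) by field. lra. }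
  assert (hpr : h r < 0). { unfold h. replace (2 * r ^ 3 - c * r + b) with (b - (c - 2 * r ^ 2) * r) by ring. rewrite hr.
    replace ((c - 2 * (c / 6)) * r) with (2 * c / 3 * r) by field. lra. }
  set (R0 := 1 + c + Rabs b + r).
  assert (hR0 : 0 < h R0 /\ h (- R0) < 0).
  { unfold h. assert (1 <= R0) by (unfold R0; pose proof (Rabs_pos b); lra).
    assert (R0 <= R0 ^ 2) by nra. assert (1 + c + Rabs b <= R0) by (unfold R0; lra).
    assert (- Rabs b <= b <= Rabs b) by (unfold Rabs; destruct Rcase_abs; lra).
    assert (R0 ^ 3 >= R0 * (1 + c + Rabs b)) by nra. split; nra. }
  destruct (ivt_loc h _ (- R0) (- r) hd ltac:(unfold R0; pose proof (Rabs_pos b); lra) ltac:(nra)) as [x1 [hx1 ex1]].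
  destruct (ivt_loc h _ (- r) r hd ltac:(lra) ltac:(nra)) as [x2 [hx2 ex2]].
  destruct (ivt_loc h _ r R0 hd ltac:(unfold R0; pose proof (Rabs_pos b); lra) ltac:(nra)) as [x3 [hx3 ex3]].
  assert (x1 <> - r) by (intro; subst; lra). assert (x2 <> - r) by (intro; subst; lra).
  assert (x2 <> r) by (intro; subst; lra). assert (x3 <> r) by (intro; subst; lra).
  assert (o12 : x1 < x2) by lra. assert (o23 : x2 < x3) by lra.
  assert (Fc := cubic_factor 0 (- c / 2) (b / 2) x1 x2 x3 ltac:(lra) ltac:(lra) ltac:(lra)
    ltac:(unfold h in ex1; lra) ltac:(unfold h in ex2; lra) ltac:(unfold h in ex3; lra)).
  set (F := fun p => p ^ 4 - c * p ^ 2 + 2 * b * p).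
  assert (Fd : forall p, derivable_pt_lim F p (4 * ((p - x1) * (p - x2) * (p - x3)))).
  { intros p. apply is_derive_Reals. eapply deriv_val'. unfold F; auto_derive; auto.
    rewrite <- Fc. unfold h in *. ring_simplify. field. }
  assert (F12 : F x1 < F x2).
  { destruct (MVT_cor2 F _ x1 x2 o12 (fun p _ => Fd p)) as [z [E hz]].
    assert (0 < (z - x1) * (z - x2) * (z - x3)) by (assert (0 < (z - x2) * (z - x3)) by nra; nra). nra. }
  assert (F23 : F x3 < F x2).
  { destruct (MVT_cor2 F _ x2 x3 o23 (fun p _ => Fd p)) as [z [E hz]].
    assert ((z - x1) * (z - x2) * (z - x3) < 0) by (assert (0 < (z - x1) * (z - x2)) by nra; nra). nra. }
  set (mx := Rmax (F x1) (F x3)).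
  assert (hmx : F x1 <= mx /\ F x3 <= mx /\ mx < F x2) by (unfold mx, Rmax; destruct Rle_dec; lra).
  set (d := - (F x2 + mx) / 4).
  assert (QF : forall p, Qpoly b c d p = F p + 2 * d) by (intros; unfold Qpoly, F; ring).
  assert (q1 : Qpoly b c d x1 < 0) by (rewrite QF; unfold d; lra).
  assert (q2 : 0 < Qpoly b c d x2) by (rewrite QF; unfold d; lra).
  assert (q3 : Qpoly b c d x3 < 0) by (rewrite QF; unfold d; lra).
  set (R1 := 1 + Rabs c + 2 * Rabs b + 2 * Rabs d + Rabs x1 + Rabs x3).
  assert (hR1a : 0 < Qpoly b c d R1).
  { apply Q_big. unfold R1. pose proof (Rabs_pos x1); pose proof (Rabs_pos x3);
    pose proof (Rabs_pos b); pose proof (Rabs_pos c); pose proof (Rabs_pos d).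
    rewrite (Rabs_pos_eq (1 + _ + _ + _ + _ + _)); lra. }
  assert (hR1b : 0 < Qpoly b c d (- R1)).
  { apply Q_big. rewrite Rabs_Ropp. unfold R1. pose proof (Rabs_pos x1); pose proof (Rabs_pos x3);
    pose proof (Rabs_pos b); pose proof (Rabs_pos c); pose proof (Rabs_pos d).
    rewrite (Rabs_pos_eq (1 + _ + _ + _ + _ + _)); lra. }
  assert (bx : - R1 <= x1 /\ x3 <= R1).
  { unfold R1. pose proof (Rabs_pos b); pose proof (Rabs_pos c); pose proof (Rabs_pos d).
    pose proof (Rabs_pos x1); pose proof (Rabs_pos x3).
    assert (- Rabs x1 <= x1) by (unfold Rabs; destruct Rcase_abs; lra).
    assert (x3 <= Rabs x3) by (apply Rle_abs). lra. }
  pose proof (Q_derive b c d) as Qd.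
  destruct (ivt_loc (Qpoly b c d) _ (- R1) x1 Qd ltac:(lra) ltac:(nra)) as [z4 [hz4 ez4]].
  destruct (ivt_loc (Qpoly b c d) _ x1 x2 Qd ltac:(lra) ltac:(nra)) as [z3 [hz3 ez3]].
  destruct (ivt_loc (Qpoly b c d) _ x2 x3 Qd ltac:(lra) ltac:(nra)) as [z2 [hz2 ez2]].
  destruct (ivt_loc (Qpoly b c d) _ x3 R1 Qd ltac:(lra) ltac:(nra)) as [z1 [hz1 ez1]].
  assert (z4 <> x1) by (intro; subst; lra). assert (z3 <> x1) by (intro; subst; lra).
  assert (z3 <> x2) by (intro; subst; lra). assert (z2 <> x2) by (intro; subst; lra).
  assert (z2 <> x3) by (intro; subst; lra). assert (z1 <> x3) by (intro; subst; lra).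
  exists d, z1, z2, z3, z4. split; [lra|split;[lra|split;[lra|]]].
  apply quartic_factor; auto; lra. Qed.

Lemma not_const_root b c d psi (M : R) : is_solution b c d psi -> bounded_fun psi -> nonconstant psi ->
  forall psi1 x0, (forall x, is_derive psi x (psi1 x)) ->
  (forall x, is_derive psi1 x (2 * psi x ^ 3 - c * psi x + b)) ->
  psi1 x0 = 0 -> 2 * psi x0 ^ 3 - c * psi x0 + b <> 0.
Proof. intros Hs [Mb HB] [x1 [x2 Hnc]] psi1 x0 H1 H2 e0 hz.
  set (m := psi x0).
  assert (forall x, psi x = (fun _ => m) x).
  { intros x. apply (ode_unique b c psi (fun _ => m) psi1 (fun _ => 0) Mb x0); auto.
    - intros t. auto_derive; auto.
    - intros t. eapply deriv_val'. auto_derive; auto. simpl. fold m in hz. lra.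
    - intros; apply HB. }
  apply Hnc. rewrite !H. auto. Qed.

Theorem lemma1 (b c d : R) :
  ((exists phi : R -> R,
      is_solution b c d phi /\ bounded_fun phi /\ periodic_fun phi /\ nonconstant phi)
     <-> four_distinct_real_roots b c d)
  /\ ((exists d' : R, four_distinct_real_roots b c d') <-> in_Omega b c)
  /\ (forall u1 u2 u3 u4 : R, four_ordered_roots b c d u1 u2 u3 u4 ->
       let nu := nu_of u1 u2 u3 u4 in
       let k := k_of u1 u2 u3 u4 in
       let phi := phi_sol u1 u2 u3 u4 in
       let L := ellK k / nu in
       is_solution b c d phi /\ bounded_fun phi /\ nonconstant phi /\
       fundamental_period phi (2 * ellK k / nu) /\
       phi 0 = u3 /\ phi L = u2 /\ phi (- L) = u2 /\
       (forall x : R, - L <= x <= L -> u3 <= phi x <= u2) /\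
       (forall psi : R -> R,
          is_solution b c d psi -> bounded_fun psi -> periodic_fun psi ->
          nonconstant psi -> exists x0 : R, forall x : R, psi x = phi (x + x0))).
Proof.
  split; [split|split; [split|]].
  - intros [psi [Hs [Hb [Hp Hnc]]]].
    destruct (sol_analysis b c d psi Hs Hp Hnc) as [psi1 [xm [xM [H1 [H2 [H3 [Hm [hlt [e1 [e2 [q1 [q2 hpos]]]]]]]]]]]].
    apply (roots_from_interval b c d (psi xm) (psi xM)); auto.
    + apply (not_const_root b c d psi 0 Hs Hb Hnc psi1 xm); auto.
    + apply (not_const_root b c d psi 0 Hs Hb Hnc psi1 xM); auto.
  - intros [u1 [u2 [u3 [u4 H4]]]]. exists (phi_sol u1 u2 u3 u4).
    split; [apply (phi_sol_solution b c d); auto|].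
    split; [apply (phi_bounded b c d); auto|].
    split; [eexists; apply (phi_period b c d); auto|].
    apply (phi_nonconst b c d); auto.
  - intros [d' H]. apply (omega_of_roots b c d'); auto.
  - apply roots_of_omega.
  - intros u1 u2 u3 u4 H4. cbv zeta.
    split; [apply (phi_sol_solution b c d); auto|].
    split; [apply (phi_bounded b c d); auto|].
    split; [apply (phi_nonconst b c d); auto|].
    split; [apply (phi_fund b c d); auto|].
    split; [apply (phi_0 b c d); auto|].
    split; [apply (phi_L b c d); auto|].
    split; [apply (phi_mL b c d); auto|].
    split; [intros; apply (phi_range b c d); auto|].
    intros psi Hs Hb Hp Hnc.
    destruct (sol_analysis b c d psi Hs Hp Hnc) as [psi1 [xm [xM [H1 [H2 [H3 [Hm [hlt [e1 [e2 [q1 [q2 hpos]]]]]]]]]]]].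
    pose proof (ord b c d u1 u2 u3 u4 H4) as Ho.
    destruct H4 as [o1 [o2 [o3 HQ]]].
    set (m := psi xm) in *. set (M := psi xM) in *.
    assert (hm : m = u3).
    { rewrite HQ in q1. apply Rmult_integral in q1. destruct q1 as [q1|q1].
      apply Rmult_integral in q1. destruct q1 as [q1|q1].
      apply Rmult_integral in q1. destruct q1 as [q1|q1].
      - (* m = u1 *) exfalso. rewrite HQ in q2.
        assert (0 < (M - u1) * (M - u2) * (M - u3) * (M - u4)).
        { assert (0 < M - u1) by lra. assert (0 < M - u2) by lra. assert (0 < M - u3) by lra.
          assert (0 < M - u4) by lra. repeat apply Rmult_lt_0_compat; lra. }
        lra.
      - (* m = u2 *) exfalso. set (p := (u2 + Rmin u1 M) / 2).
        assert (u2 < p < u1 /\ m < p < M) by (unfold p, Rmin; destruct Rle_dec; lra).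
        pose proof (hpos p ltac:(lra)). rewrite HQ in H0.
        assert ((p - u1) * (p - u2) < 0) by nra. assert (0 < (p - u3) * (p - u4)) by nra. nra.
      - lra.
      - (* m = u4 *) exfalso. set (p := (u4 + Rmin u3 M) / 2).
        assert (u4 < p < u3 /\ m < p < M) by (unfold p, Rmin; destruct Rle_dec; lra).
        pose proof (hpos p ltac:(lra)). rewrite HQ in H0.
        assert (0 < (p - u1) * (p - u2)) by nra. assert ((p - u3) * (p - u4) < 0) by nra. nra. }
    assert (H4 : four_ordered_roots b c d u1 u2 u3 u4) by (split; auto).
    destruct (sol2 _ _ _ _ (phi_sol_solution b c d u1 u2 u3 u4 H4)) as [f1 [F1 [F2 F3]]].
    set (phi := phi_sol u1 u2 u3 u4) in *.
    assert (f10 : f1 0 = 0).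
    { apply (deriv_zero_min phi f1 0 F1). intros x. unfold phi. rewrite (phi_0 b c d u1 u2 u3 u4 H4).
      apply (phi_range b c d u1 u2 u3 u4 H4). }
    destruct Hb as [Mb HB].
    exists (- xm). intros x.
    apply (ode_unique b c psi (fun x => phi (x + - xm)) psi1 (fun x => f1 (x + - xm))
      (Rmax Mb (Rabs u2 + Rabs u3)) xm); auto.
    + intros t. eapply deriv_val'. apply (is_derive_comp phi (fun x => x + - xm)). apply F1.
      auto_derive; auto. change (scal ?a ?b) with (a * b). ring.
    + intros t. eapply deriv_val'. apply (is_derive_comp f1 (fun x => x + - xm)). apply F2.
      auto_derive; auto. change (scal ?a ?b) with (a * b). ring.
    + intros t. apply Rle_trans with Mb; auto. apply Rmax_l.
    + intros t. apply Rle_trans with (Rabs u2 + Rabs u3); [|apply Rmax_r].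
      pose proof (phi_range b c d u1 u2 u3 u4 H4 (t + - xm)). fold phi in H.
      unfold Rabs; repeat destruct Rcase_abs; lra.
    + replace (xm + - xm) with 0 by ring. unfold phi. rewrite (phi_0 b c d u1 u2 u3 u4 H4). auto.
    + replace (xm + - xm) with 0 by ring. rewrite f10. auto.
Qed.
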